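(* Consider the planar SLAM system $$\dot x = u\,R_\theta e_1,\qquad \dot\theta = u v,\qquad \dot p_i = 0\quad (1\le i\le N),$$ with measurements $z_i = R_{-\theta}(p_i - x)$. For an estimate $(\hat x,\hat\theta,\hat p_1,\dots,\hat p_N)$ let $\hat z_i = R_{-\hat\theta}(\hat p_i-\hat x)$ and let $E = (E_1,\dots,E_N)$ with $E_i = R_{\hat\theta}(\hat z_i - z_i)\in\mathbb R^2$. Let $\mathcal L_\theta:\mathbb R^{2N}\to\mathbb R$ and $\mathcal L_x,\mathcal L_1,\dots,\mathcal L_N:\mathbb R^{2N}\to\mathbb R^2$ be smooth maps vanishing at $0$, and consider the observer $$\dot{\hat\theta} = uv + \mathcal L_\theta(E),\qquad \dot{\hat x} = u R_{\hat\theta}e_1 + \mathcal L_\theta(E)\, e_3\wedge \hat x + \mathcal L_x(E),\qquad \dot{\hat p}_i = \mathcal L_\theta(E)\, e_3\wedge\hat p_i + \mathcal L_i(E).$$ Define the invariant state error $\eta = (\tilde\theta,\tilde x,\tilde p_1,\dots,\tilde p_N)$ by $$\tilde\theta = \hat\theta-\theta,\qquad \tilde x = \hat x - R_{\tilde\theta}x,\qquad \tilde p_i = \hat p_i - R_{\tilde\theta}p_i.$$ Then $E_i = \tilde p_i - \tilde x$ for each $i$, and $\eta$ satisfies the autonomous differential equation $$\dot{\tilde\theta} = \mathcal L_\theta(E),\qquad \dot{\tilde x} = \mathcal L_\theta(E)\,e_3\wedge\tilde x + \mathcal L_x(E),\qquad \dot{\tilde p}_i = \mathcal L_\theta(E)\,e_3\wedge\tilde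 p_i + \mathcal L_i(E),$$ which depends only on $\eta$ (and not on the trajectory, nor on $u(t),v(t)$). In particular, its linearization at $\eta=0$ is the time-invariant linear system $\frac{d}{dt}\delta\eta = LC\,\delta\eta$, where $C$ is the fixed linear map $\delta\eta=(\delta\theta,\delta x,\delta p_1,\dots,\delta p_N)\mapsto(\delta p_1-\delta x,\dots,\delta p_N-\delta x)$ and $L$ is the differential at $0$ of $(\mathcal L_\theta,\mathcal L_x,\mathcal L_1,\dots,\mathcal L_N)$, which can be chosen freely.
   Context: The state is $(x,\theta,p_1,\dots,p_N)$ with $x\in\mathbb R^2$ the vehicle position, $\theta\in\mathbb R$ its heading and $p_i\in\mathbb R^2$ the fixed landmark positions in a common reference frame; $u(t),v(t)\in\mathbb R$ are known scalar inputs. $e_1=(1,0)^T$, $R_\theta$ is the $2\times2$ rotation matrix of angle $\theta$. For a planar vector $w=(a,b)^T$, $e_3\wedge w$ denotes the planar vector $(-b,a)^T$ (cross product with the vertical unit vector $e_3$, restricted to the plane). *)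

(* Defs.v *)
From Stdlib Require Import Reals Lra.
Open Scope R_scope.

Definition R2 := (R * R)%type.
Definition v2add (a b : R2) : R2 := (fst a + fst b, snd a + snd b).
Definition v2sub (a b : R2) : R2 := (fst a - fst b, snd a - snd b).
Definition v2scal (c : R) (a : R2) : R2 := (c * fst a, c * snd a).
Definition v2zero : R2 := (0, 0).
Definition v2norm (a : R2) : R := Rabs (fst a) + Rabs (snd a).
Definition rot (th : R) (w : R2) : R2 :=
  (cos th * fst w - sin th * snd w, sin th * fst w + cos th * snd w).
Definition e1 : R2 := (1, 0).
(** e3 /\ w = (-b, a) for w = (a, b) *)
Definition e3w (w : R2) : R2 := (- snd w, fst w).

Definition deriv2 (f : R -> R2) (t : R) (l : R2) : Prop :=
  derivable_pt_lim (fun s => fst (f s)) t (fst l) /\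
  derivable_pt_lim (fun s => snd (f s)) t (snd l).

Fixpoint sumN (n : nat) (f : nat -> R) : R :=
  match n with O => 0 | S k => sumN k f + f k end.

(** The output space R^{2N}: only the indices i < N are meaningful. *)
Definition Evec := nat -> R2.
Definition normE (N : nat) (e : Evec) : R := sumN N (fun i => v2norm (e i)).
Definition combE (a b : R) (e e' : Evec) : Evec :=
  fun i => v2add (v2scal a (e i)) (v2scal b (e' i)).
Definition zeroE : Evec := fun _ => v2zero.

(** The (error) state space R x R^2 x (R^2)^N: only p_i, i < N, are meaningful. *)
Record State := mkState { s_th : R; s_x : R2; s_p : nat -> R2 }.
Definition normS (N : nat) (s : State) : R :=
  Rabs (s_th s) + v2norm (s_x s) + sumN N (fun i => v2norm (s_p s i)).
Definition subS (s s' : State) : State :=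
  mkState (s_th s - s_th s') (v2sub (s_x s) (s_x s')) (fun i => v2sub (s_p s i) (s_p s' i)).
Definition combS (a b : R) (s s' : State) : State :=
  mkState (a * s_th s + b * s_th s')
          (v2add (v2scal a (s_x s)) (v2scal b (s_x s')))
          (fun i => v2add (v2scal a (s_p s i)) (v2scal b (s_p s' i))).
Definition zeroS : State := mkState 0 v2zero (fun _ => v2zero).

Definition Cmap (N : nat) (s : State) : Evec :=
  fun i => if Nat.ltb i N then v2sub (s_p s i) (s_x s) else v2zero.

Definition Lmap (Lth : Evec -> R) (Lx : Evec -> R2) (Lp : nat -> Evec -> R2)
  (e : Evec) : State := mkState (Lth e) (Lx e) (fun i => Lp i e).

Definition linear_ES (N : nat) (D : Evec -> State) : Prop :=
  forall a b e e',
    s_th (D (combE a b e e')) = a * s_th (D e) + b * s_th (D e') /\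
    s_x (D (combE a b e e')) = v2add (v2scal a (s_x (D e))) (v2scal b (s_x (D e'))) /\
    (forall i, (i < N)%nat ->
       s_p (D (combE a b e e')) i = v2add (v2scal a (s_p (D e) i)) (v2scal b (s_p (D e') i))).
Definition linear_SS (N : nat) (D : State -> State) : Prop :=
  forall a b s s',
    s_th (D (combS a b s s')) = a * s_th (D s) + b * s_th (D s') /\
    s_x (D (combS a b s s')) = v2add (v2scal a (s_x (D s))) (v2scal b (s_x (D s'))) /\
    (forall i, (i < N)%nat ->
       s_p (D (combS a b s s')) i = v2add (v2scal a (s_p (D s) i)) (v2scal b (s_p (D s') i))).

Definition differential0_ES (N : nat) (f D : Evec -> State) : Prop :=
  linear_ES N D /\
  forall eps, eps > 0 -> exists delta, delta > 0 /\
    forall e, normE N e < delta ->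
      normS N (subS (subS (f e) (f zeroE)) (D e)) <= eps * normE N e.
Definition differential0_SS (N : nat) (f D : State -> State) : Prop :=
  linear_SS N D /\
  forall eps, eps > 0 -> exists delta, delta > 0 /\
    forall s, normS N s < delta ->
      normS N (subS (subS (f s) (f zeroS)) (D s)) <= eps * normS N s.

(** Output errors  E_i = R_{th^}(z^_i - z_i),  z_i = R_{-th}(p_i - x),  z^_i = R_{-th^}(p^_i - x^). *)
Definition Eerr (N : nat) (x : R2) (th : R) (p : nat -> R2)
  (xh : R2) (thh : R) (ph : nat -> R2) : Evec :=
  fun i => if Nat.ltb i N then
             rot thh (v2sub (rot (- thh) (v2sub (ph i) xh)) (rot (- th) (v2sub (p i) x)))
           else v2zero.

Definition eta (x : R2) (th : R) (p : nat -> R2) (xh : R2) (thh : R) (ph : nat -> R2)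
  : State :=
  mkState (thh - th) (v2sub xh (rot (thh - th) x))
          (fun i => v2sub (ph i) (rot (thh - th) (p i))).

Definition errorDyn (N : nat) (Lth : Evec -> R) (Lx : Evec -> R2)
  (Lp : nat -> Evec -> R2) (s : State) : State :=
  let E := Cmap N s in
  mkState (Lth E)
          (v2add (v2scal (Lth E) (e3w (s_x s))) (Lx E))
          (fun i => v2add (v2scal (Lth E) (e3w (s_p s i))) (Lp i E)).

(* Main.v *)
Require Import Defs.
From Stdlib Require Import Reals.
From Stdlib Require Import Lra Lia FunctionalExtensionality.
Open Scope R_scope.

Lemma dlim_rep f t l l' : derivable_pt_lim f t l -> l = l' -> derivable_pt_lim f t l'.
Proof. intros H ->; exact H. Qed.

Lemma dcos f t df : derivable_pt_lim f t df ->
  derivable_pt_lim (fun s => cos (f s)) t (- sin (f t) * df).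
Proof.
  intro H. apply (derivable_pt_lim_comp f cos t df (- sin (f t)) H).
  apply derivable_pt_lim_cos.
Qed.
Lemma dsin f t df : derivable_pt_lim f t df ->
  derivable_pt_lim (fun s => sin (f s)) t (cos (f t) * df).
Proof.
  intro H. apply (derivable_pt_lim_comp f sin t df (cos (f t)) H).
  apply derivable_pt_lim_sin.
Qed.

Lemma drot1 f a b t df da db : derivable_pt_lim f t df ->
  derivable_pt_lim a t da -> derivable_pt_lim b t db ->
  derivable_pt_lim (fun s => cos (f s) * a s - sin (f s) * b s) t
   (- sin (f t) * df * a t + cos (f t) * da - (cos (f t) * df * b t + sin (f t) * db)).
Proof.
  intros Hf Ha Hb.
  apply (derivable_pt_lim_minus (fun s => cos (f s) * a s) (fun s => sin (f s) * b s)).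
  - apply (derivable_pt_lim_mult (fun s => cos (f s)) a); [apply dcos|]; auto.
  - apply (derivable_pt_lim_mult (fun s => sin (f s)) b); [apply dsin|]; auto.
Qed.
Lemma drot2 f a b t df da db : derivable_pt_lim f t df ->
  derivable_pt_lim a t da -> derivable_pt_lim b t db ->
  derivable_pt_lim (fun s => sin (f s) * a s + cos (f s) * b s) t
   (cos (f t) * df * a t + sin (f t) * da + (- sin (f t) * df * b t + cos (f t) * db)).
Proof.
  intros Hf Ha Hb.
  apply (derivable_pt_lim_plus (fun s => sin (f s) * a s) (fun s => cos (f s) * b s)).
  - apply (derivable_pt_lim_mult (fun s => sin (f s)) a); [apply dsin|]; auto.
  - apply (derivable_pt_lim_mult (fun s => cos (f s)) b); [apply dcos|]; auto.
Qed.

Lemma Eerr_C N x th p xh thh ph :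
  Eerr N x th p xh thh ph = Cmap N (eta x th p xh thh ph).
Proof.
  apply functional_extensionality; intro i. unfold Eerr, Cmap.
  destruct (Nat.ltb i N); [|reflexivity].
  unfold eta, rot, v2sub; simpl.
  rewrite !cos_neg, !sin_neg, cos_minus, sin_minus.
  assert (H := sin2_cos2 thh). unfold Rsqr in H.
  f_equal.
  - apply Rminus_diag_uniq.
    match goal with |- ?L - ?R = 0 => replace (L - R) with
      ((sin thh * sin thh + cos thh * cos thh - 1) * (fst (ph i) - fst xh)) by ring end.
    rewrite H; ring.
  - apply Rminus_diag_uniq.
    match goal with |- ?L - ?R = 0 => replace (L - R) with
      ((sin thh * sin thh + cos thh * cos thh - 1) * (snd (ph i) - snd xh)) by ring end.
    rewrite H; ring.
Qed.

Lemma sumN_le n f g : (forall i, (i < n)%nat -> f i <= g i) -> sumN n f <= sumN n g.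
Proof. induction n; simpl; intros H; [lra|]. pose proof (H n (Nat.lt_succ_diag_r n)).
  assert (sumN n f <= sumN n g) by (apply IHn; intros; apply H; lia). lra. Qed.
Lemma sumN_plus n f g : sumN n (fun i => f i + g i) = sumN n f + sumN n g.
Proof. induction n; simpl; [ring|]. rewrite IHn; ring. Qed.
Lemma sumN_scal n c f : sumN n (fun i => c * f i) = c * sumN n f.
Proof. induction n; simpl; [ring|]. rewrite IHn; ring. Qed.
Lemma sumN_const n c : sumN n (fun _ => c) = INR n * c.
Proof. induction n; simpl sumN; [simpl; ring|]. rewrite IHn, S_INR; ring. Qed.
Lemma sumN_nonneg n f : (forall i, (i < n)%nat -> 0 <= f i) -> 0 <= sumN n f.
Proof. intros H. apply Rle_trans with (sumN n (fun _ => 0)).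
  rewrite sumN_const; lra. apply sumN_le; auto. Qed.
Lemma sumN_term n f i : (forall j, (j < n)%nat -> 0 <= f j) -> (i < n)%nat -> f i <= sumN n f.
Proof. induction n; simpl; intros H Hi; [lia|].
  assert (0 <= sumN n f) by (apply sumN_nonneg; intros; apply H; lia).
  destruct (Nat.eq_dec i n) as [->|].
  - lra.
  - assert (f i <= sumN n f) by (apply IHn; [intros; apply H; lia| lia]).
    pose proof (H n (Nat.lt_succ_diag_r n)). lra. Qed.

Lemma v2norm_nonneg w : 0 <= v2norm w.
Proof. unfold v2norm. pose proof (Rabs_pos (fst w)); pose proof (Rabs_pos (snd w)); lra. Qed.

Lemma normS_nonneg N s : 0 <= normS N s.
Proof. unfold normS. pose proof (Rabs_pos (s_th s)). pose proof (v2norm_nonneg (s_x s)).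
  assert (0 <= sumN N (fun i => v2norm (s_p s i))) by (apply sumN_nonneg; intros; apply v2norm_nonneg).
  lra. Qed.

Lemma key c w a a0 c0 d :
  v2norm (v2sub (v2sub (v2add (v2scal c (e3w w)) a) (v2add (v2scal c0 (e3w v2zero)) a0)) d)
  <= v2norm (v2sub (v2sub a a0) d) + Rabs c * v2norm w.
Proof.
  destruct w as [w1 w2], a as [a1 a2], a0 as [b1 b2], d as [d1 d2].
  unfold v2norm, v2sub, v2add, v2scal, e3w, v2zero; simpl.
  replace (c * - w2 + a1 - (c0 * - 0 + b1) - d1) with ((a1 - b1 - d1) + c * - w2) by ring.
  replace (c * w1 + a2 - (c0 * 0 + b2) - d2) with ((a2 - b2 - d2) + c * w1) by ring.
  pose proof (Rabs_triang (a1 - b1 - d1) (c * - w2)).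
  pose proof (Rabs_triang (a2 - b2 - d2) (c * w1)).
  rewrite !Rabs_mult in *. rewrite Rabs_Ropp in *. lra.
Qed.

Definition trunc (k : nat) (e : Evec) : Evec := fun i => if Nat.ltb i k then e i else v2zero.
Definition single (k : nat) (w : R2) : Evec := fun i => if Nat.eqb i k then w else v2zero.

Lemma trunc_S k e : trunc (S k) e = combE 1 1 (trunc k e) (single k (e k)).
Proof.
  apply functional_extensionality; intro i. unfold trunc, single, combE, v2add, v2scal, v2zero.
  destruct (Nat.ltb_spec i (S k)); destruct (Nat.ltb_spec i k); destruct (Nat.eqb_spec i k);
   try lia; subst; try destruct (e i); try destruct (e k); simpl; f_equal; ring.
Qed.
Lemma single_dec k w : single k w = combE (fst w) (snd w) (single k (1,0)) (single k (0,1)).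
Proof.
  apply functional_extensionality; intro i. unfold single, combE, v2add, v2scal, v2zero.
  destruct (Nat.eqb i k); destruct w; simpl; f_equal; ring.
Qed.
Lemma zeroE_comb : zeroE = combE 0 0 zeroE zeroE.
Proof.
  apply functional_extensionality; intro i. unfold zeroE, combE, v2add, v2scal, v2zero; simpl.
  f_equal; ring.
Qed.

Lemma Dbound N (D : Evec -> State) (Hlin : linear_ES N D) e A k :
  (forall i, (i < k)%nat -> Rabs (fst (e i)) <= A /\ Rabs (snd (e i)) <= A) ->
  Rabs (s_th (D (trunc k e))) <=
  sumN k (fun i => Rabs (s_th (D (single i (1,0)))) + Rabs (s_th (D (single i (0,1))))) * A.
Proof.
  induction k; intros H.
  - simpl. replace (trunc 0 e) with zeroE by reflexivity.
    rewrite zeroE_comb. destruct (Hlin 0 0 zeroE zeroE) as [-> _].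
    rewrite Rmult_0_l, Rmult_0_l, Rplus_0_l, Rabs_R0. lra.
  - rewrite trunc_S. destruct (Hlin 1 1 (trunc k e) (single k (e k))) as [-> _].
    rewrite single_dec. destruct (Hlin (fst (e k)) (snd (e k)) (single k (1,0)) (single k (0,1))) as [-> _].
    simpl sumN.
    assert (IH : Rabs (s_th (D (trunc k e))) <=
      sumN k (fun i => Rabs (s_th (D (single i (1,0)))) + Rabs (s_th (D (single i (0,1))))) * A)
      by (apply IHk; intros; apply H; lia).
    destruct (H k (Nat.lt_succ_diag_r k)) as [Ha Hb].
    set (X := s_th (D (trunc k e))) in *.
    set (Y := s_th (D (single k (1,0)))). set (Z := s_th (D (single k (0,1)))).
    pose proof (Rabs_triang (1 * X) (1 * (fst (e k) * Y + snd (e k) * Z))).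
    pose proof (Rabs_triang (fst (e k) * Y) (snd (e k) * Z)).
    rewrite !Rabs_mult, Rabs_R1 in *.
    pose proof (Rabs_pos Y); pose proof (Rabs_pos Z).
    assert (Rabs (fst (e k)) * Rabs Y <= A * Rabs Y) by (apply Rmult_le_compat_r; auto).
    assert (Rabs (snd (e k)) * Rabs Z <= A * Rabs Z) by (apply Rmult_le_compat_r; auto).
    lra.
Qed.

Lemma part2 (N : nat) (u v : R -> R)
  (x : R -> R2) (th : R -> R) (p : nat -> R2)
  (xh : R -> R2) (thh : R -> R) (ph : nat -> R -> R2)
  (Lth : Evec -> R) (Lx : Evec -> R2) (Lp : nat -> Evec -> R2)
  (Hx : forall t, deriv2 x t (v2scal (u t) (rot (th t) e1)))
  (Hth : forall t, derivable_pt_lim th t (u t * v t))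
  (Hthh : forall t, derivable_pt_lim thh t
     (u t * v t + Lth (Eerr N (x t) (th t) p (xh t) (thh t) (fun j => ph j t))))
  (Hxh : forall t, deriv2 xh t
     (let E := Eerr N (x t) (th t) p (xh t) (thh t) (fun j => ph j t) in
      v2add (v2add (v2scal (u t) (rot (thh t) e1)) (v2scal (Lth E) (e3w (xh t)))) (Lx E)))
  (Hph : forall i t, (i < N)%nat -> deriv2 (ph i) t
     (let E := Eerr N (x t) (th t) p (xh t) (thh t) (fun j => ph j t) in
      v2add (v2scal (Lth E) (e3w (ph i t))) (Lp i E))) :
  let etat := fun t => eta (x t) (th t) p (xh t) (thh t) (fun j => ph j t) in
  (forall t,
     derivable_pt_lim (fun s => s_th (etat s)) t (s_th (errorDyn N Lth Lx Lp (etat t))) /\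
     deriv2 (fun s => s_x (etat s)) t (s_x (errorDyn N Lth Lx Lp (etat t))) /\
     (forall i, (i < N)%nat ->
        deriv2 (fun s => s_p (etat s) i) t (s_p (errorDyn N Lth Lx Lp (etat t)) i))).
Proof.
  intros etat t.
  unfold etat, errorDyn; cbv beta zeta.
  set (E := Cmap N (eta (x t) (th t) p (xh t) (thh t) (fun j => ph j t))).
  assert (HE : Eerr N (x t) (th t) p (xh t) (thh t) (fun j => ph j t) = E)
    by (unfold E; apply Eerr_C). clearbody E.
  specialize (Hthh t); specialize (Hxh t); specialize (Hth t); specialize (Hx t).
  cbv zeta in Hxh, Hph. rewrite HE in Hthh, Hxh.
  assert (Hphi : derivable_pt_lim (fun s => thh s - th s) t (Lth E)).
  { eapply dlim_rep. apply (derivable_pt_lim_minus thh th); eauto. ring. }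
  assert (Hc : cos (thh t) = cos (thh t - th t) * cos (th t) - sin (thh t - th t) * sin (th t)).
  { rewrite <- cos_plus. f_equal. ring. }
  assert (Hs : sin (thh t) = sin (thh t - th t) * cos (th t) + cos (thh t - th t) * sin (th t)).
  { rewrite <- sin_plus. f_equal. ring. }
  destruct Hx as [Hx1 Hx2]; destruct Hxh as [Hxh1 Hxh2].
  unfold eta; simpl.
  split; [|split].
  - exact Hphi.
  - unfold deriv2, v2sub, rot, v2add, v2scal, e3w in *; simpl in *. split.
    + eapply dlim_rep.
      apply (derivable_pt_lim_minus (fun s => fst (xh s))); [exact Hxh1|].
      apply (drot1 (fun s => thh s - th s)); eauto.
      rewrite Hc in *. ring.
    + eapply dlim_rep.
      apply (derivable_pt_lim_minus (fun s => snd (xh s))); [exact Hxh2|].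
      apply (drot2 (fun s => thh s - th s)); eauto.
      rewrite Hs in *. ring.
  - intros i Hi. destruct (Hph i t Hi) as [Hp1 Hp2]. rewrite HE in Hp1, Hp2.
    unfold deriv2, v2sub, rot, v2add, v2scal, e3w in *; simpl in *. split.
    + eapply dlim_rep.
      apply (derivable_pt_lim_minus (fun s => fst (ph i s))); [exact Hp1|].
      apply (drot1 (fun s => thh s - th s)); eauto; apply derivable_pt_lim_const.
      cbv beta; ring.
    + eapply dlim_rep.
      apply (derivable_pt_lim_minus (fun s => snd (ph i s))); [exact Hp2|].
      apply (drot2 (fun s => thh s - th s)); eauto; apply derivable_pt_lim_const.
      cbv beta; ring.
Qed.

Lemma Cmap_comb N a b s s' : Cmap N (combS a b s s') = combE a b (Cmap N s) (Cmap N s').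
Proof.
  apply functional_extensionality; intro i. unfold Cmap, combS, combE, v2add, v2sub, v2scal, v2zero; simpl.
  destruct (Nat.ltb i N); f_equal; simpl; ring.
Qed.
Lemma Cmap_zero N : Cmap N zeroS = zeroE.
Proof.
  apply functional_extensionality; intro i. unfold Cmap, zeroS, zeroE, v2sub, v2zero; simpl.
  destruct (Nat.ltb i N); f_equal; simpl; ring.
Qed.
Lemma trunc_C N s : trunc N (Cmap N s) = Cmap N s.
Proof.
  apply functional_extensionality; intro i. unfold trunc, Cmap.
  destruct (Nat.ltb i N); reflexivity.
Qed.
Lemma normE_C N s : normE N (Cmap N s) <= (INR N + 1) * normS N s.
Proof.
  unfold normE, normS.
  apply Rle_trans with (sumN N (fun i => v2norm (s_p s i) + v2norm (s_x s))).
  - apply sumN_le; intros i Hi. unfold Cmap. destruct (Nat.ltb_spec i N); [|lia].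
    unfold v2norm, v2sub. destruct (s_p s i), (s_x s); simpl.
    pose proof (Rabs_triang r (- r1)); pose proof (Rabs_triang r0 (- r2)).
    rewrite Rabs_Ropp in *. unfold Rminus. lra.
  - rewrite sumN_plus, sumN_const.
    pose proof (Rabs_pos (s_th s)). pose proof (v2norm_nonneg (s_x s)).
    assert (0 <= sumN N (fun i => v2norm (s_p s i))) by (apply sumN_nonneg; intros; apply v2norm_nonneg).
    pose proof (pos_INR N).
    assert (INR N * v2norm (s_x s) <= INR N * (Rabs (s_th s) + v2norm (s_x s) + sumN N (fun i => v2norm (s_p s i))))
      by (apply Rmult_le_compat_l; lra).
    nra.
Qed.
Lemma comp_le_normE N e i : (i < N)%nat -> Rabs (fst (e i)) <= normE N e /\ Rabs (snd (e i)) <= normE N e.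
Proof.
  intros Hi. assert (H : v2norm (e i) <= normE N e)
    by (apply (sumN_term N (fun j => v2norm (e j))); [intros; apply v2norm_nonneg|auto]).
  unfold v2norm in H. pose proof (Rabs_pos (fst (e i))); pose proof (Rabs_pos (snd (e i))). lra.
Qed.

Lemma part3 N (Lth : Evec -> R) (Lx : Evec -> R2) (Lp : nat -> Evec -> R2)
  (HL0th : Lth zeroE = 0) (DL : Evec -> State) :
  differential0_ES N (Lmap Lth Lx Lp) DL ->
  differential0_SS N (errorDyn N Lth Lx Lp) (fun d => DL (Cmap N d)).
Proof.
  intros [Hlin Hd]. split.
  - intros a b s s'. rewrite Cmap_comb. apply Hlin.
  - set (K := INR N + 1).
    set (S := sumN N (fun i => Rabs (s_th (DL (single i (1,0)))) + Rabs (s_th (DL (single i (0,1)))))).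
    assert (HK : 0 < K) by (unfold K; pose proof (pos_INR N); lra).
    assert (HS : 0 <= S) by (apply sumN_nonneg; intros; pose proof (Rabs_pos (s_th (DL (single i (1,0)))));
       pose proof (Rabs_pos (s_th (DL (single i (0,1))))); lra).
    set (B := 1 + S). assert (HB : 0 < B) by (unfold B; lra).
    intros eps Heps.
    destruct (Hd (eps / (2 * K))) as [d1 [Hd1 H1]].
    { apply Rdiv_lt_0_compat; lra. }
    destruct (Hd 1) as [d2 [Hd2 H2]]; [lra|].
    exists (Rmin (Rmin (d1 / K) (d2 / K)) (eps / (2 * K * B))). split.
    { apply Rmin_pos; [apply Rmin_pos|]; apply Rdiv_lt_0_compat; nra. }
    intros s Hs.
    assert (Hm1 := Rmin_l (Rmin (d1 / K) (d2 / K)) (eps / (2 * K * B))).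
    assert (Hm2 := Rmin_r (Rmin (d1 / K) (d2 / K)) (eps / (2 * K * B))).
    assert (Hm3 := Rmin_l (d1 / K) (d2 / K)). assert (Hm4 := Rmin_r (d1 / K) (d2 / K)).
    pose proof (normS_nonneg N s) as Hs0.
    pose proof (normE_C N s) as HEC. fold K in HEC.
    set (e := Cmap N s) in *.
    assert (HE0 : 0 <= normE N e) by (apply sumN_nonneg; intros; apply v2norm_nonneg).
    assert (HeK1 : normE N e < d1).
    { apply Rle_lt_trans with (K * normS N s); [lra|].
      assert (normS N s < d1 / K) by lra.
      apply (Rmult_lt_compat_l K) in H; [|lra]. unfold Rdiv in H.
      rewrite <- Rmult_assoc, (Rmult_comm K d1), Rmult_assoc, Rinv_r, Rmult_1_r in H; lra. }
    assert (HeK2 : normE N e < d2).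
    { apply Rle_lt_trans with (K * normS N s); [lra|].
      assert (normS N s < d2 / K) by lra.
      apply (Rmult_lt_compat_l K) in H; [|lra]. unfold Rdiv in H.
      rewrite <- Rmult_assoc, (Rmult_comm K d2), Rmult_assoc, Rinv_r, Rmult_1_r in H; lra. }
    specialize (H1 e HeK1). specialize (H2 e HeK2).
    assert (HD : Rabs (s_th (DL e)) <= S * normE N e).
    { unfold e. rewrite <- trunc_C. apply (Dbound N); auto.
      intros i Hi. rewrite trunc_C. apply comp_le_normE; auto. }
    assert (HLe : Rabs (Lth e) <= B * normE N e).
    { assert (Hth2 : Rabs (Lth e - Lth zeroE - s_th (DL e)) <= 1 * normE N e).
      { eapply Rle_trans; [|exact H2]. unfold normS, subS; simpl.
        pose proof (v2norm_nonneg (v2sub (v2sub (Lx e) (Lx zeroE)) (s_x (DL e)))).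
        match goal with |- _ <= _ + _ + ?T => assert (0 <= T) by (apply sumN_nonneg; intros; apply v2norm_nonneg) end.
        lra. }
      rewrite HL0th in Hth2.
      replace (Lth e) with ((Lth e - 0 - s_th (DL e)) + s_th (DL e)) by ring.
      pose proof (Rabs_triang (Lth e - 0 - s_th (DL e)) (s_th (DL e))). unfold B. lra. }
    assert (HLe2 : Rabs (Lth e) <= eps / 2).
    { apply Rle_trans with (B * (K * normS N s)).
      - apply Rle_trans with (B * normE N e); auto. apply Rmult_le_compat_l; lra.
      - assert (normS N s <= eps / (2 * K * B)) by lra.
        apply (Rmult_le_compat_l (B * K)) in H; [|nra].
        replace (B * K * (eps / (2 * K * B))) with (eps / 2) in H by (field; lra). nra. }
    assert (Hmain : normS N (subS (subS (errorDyn N Lth Lx Lp s) (errorDyn N Lth Lx Lp zeroS)) (DL e))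
      <= normS N (subS (subS (Lmap Lth Lx Lp e) (Lmap Lth Lx Lp zeroE)) (DL e)) + Rabs (Lth e) * normS N s).
    { unfold errorDyn. cbv zeta. fold e. rewrite Cmap_zero.
      unfold normS, subS, Lmap. cbn [s_th s_x s_p zeroS].
      pose proof (key (Lth e) (s_x s) (Lx e) (Lx zeroE) (Lth zeroE) (s_x (DL e))).
      assert (sumN N (fun i => v2norm (v2sub (v2sub (v2add (v2scal (Lth e) (e3w (s_p s i))) (Lp i e))
         (v2add (v2scal (Lth zeroE) (e3w v2zero)) (Lp i zeroE))) (s_p (DL e) i)))
        <= sumN N (fun i => v2norm (v2sub (v2sub (Lp i e) (Lp i zeroE)) (s_p (DL e) i)))
           + Rabs (Lth e) * sumN N (fun i => v2norm (s_p s i))).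
      { rewrite <- sumN_scal, <- sumN_plus. apply sumN_le; intros; apply key. }
      pose proof (Rabs_pos (Lth e)). pose proof (Rabs_pos (s_th s)).
      assert (0 <= Rabs (Lth e) * Rabs (s_th s)) by nra.
      lra. }
    apply Rle_trans with (1 := Hmain).
    assert (H1' : eps / (2 * K) * normE N e <= eps / 2 * normS N s).
    { apply Rle_trans with (eps / (2 * K) * (K * normS N s)).
      - apply Rmult_le_compat_l; [apply Rlt_le, Rdiv_lt_0_compat; lra| lra].
      - right. field. lra. }
    assert (Rabs (Lth e) * normS N s <= eps / 2 * normS N s) by (apply Rmult_le_compat_r; auto).
    lra.
Qed.

Theorem mainTheorem2 (N : nat) (u v : R -> R)
  (x : R -> R2) (th : R -> R) (p : nat -> R2)
  (xh : R -> R2) (thh : R -> R) (ph : nat -> R -> R2)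
  (Lth : Evec -> R) (Lx : Evec -> R2) (Lp : nat -> Evec -> R2)
  (HL0th : Lth zeroE = 0) (HL0x : Lx zeroE = v2zero)
  (HL0p : forall i, (i < N)%nat -> Lp i zeroE = v2zero)
  (* system *)
  (Hx : forall t, deriv2 x t (v2scal (u t) (rot (th t) e1)))
  (Hth : forall t, derivable_pt_lim th t (u t * v t))
  (* observer *)
  (Hthh : forall t, derivable_pt_lim thh t
     (u t * v t + Lth (Eerr N (x t) (th t) p (xh t) (thh t) (fun j => ph j t))))
  (Hxh : forall t, deriv2 xh t
     (let E := Eerr N (x t) (th t) p (xh t) (thh t) (fun j => ph j t) in
      v2add (v2add (v2scal (u t) (rot (thh t) e1)) (v2scal (Lth E) (e3w (xh t)))) (Lx E)))
  (Hph : forall i t, (i < N)%nat -> deriv2 (ph i) t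
     (let E := Eerr N (x t) (th t) p (xh t) (thh t) (fun j => ph j t) in
      v2add (v2scal (Lth E) (e3w (ph i t))) (Lp i E))) :
  let etat := fun t => eta (x t) (th t) p (xh t) (thh t) (fun j => ph j t) in
  (* E_i = p~_i - x~ *)
  (forall t i, (i < N)%nat ->
     Eerr N (x t) (th t) p (xh t) (thh t) (fun j => ph j t) i
     = v2sub (s_p (etat t) i) (s_x (etat t))) /\
  (* autonomous error dynamics  d/dt eta = errorDyn eta *)
  (forall t,
     derivable_pt_lim (fun s => s_th (etat s)) t (s_th (errorDyn N Lth Lx Lp (etat t))) /\
     deriv2 (fun s => s_x (etat s)) t (s_x (errorDyn N Lth Lx Lp (etat t))) /\
     (forall i, (i < N)%nat ->
        deriv2 (fun s => s_p (etat s) i) t (s_p (errorDyn N Lth Lx Lp (etat t)) i))) /\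
  (* linearization at eta = 0 is  d/dt delta_eta = L C delta_eta *)
  (forall DL : Evec -> State,
     differential0_ES N (Lmap Lth Lx Lp) DL ->
     differential0_SS N (errorDyn N Lth Lx Lp) (fun d => DL (Cmap N d))).
Proof.
  intros etat. split; [|split].
  - intros t i Hi. rewrite Eerr_C. unfold Cmap. destruct (Nat.ltb_spec i N); [reflexivity|lia].
  - apply (part2 N u v); auto.
  - intros DL HDL. apply part3; auto.
Qed.
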